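(* Let $L$ be a reduced Latin square of order $n$ with rows $\sigma_1,\dots,\sigma_n$ (as permutations), and let $\Theta=(\alpha,\beta,\gamma)\in\mathfrak A(L)$. Then for each $i=1,\dots,n$, the permutation $\sigma_{\alpha^{-1}(1)}^{-1}\sigma_{\alpha^{-1}(i)}$ has the same cycle structure as $\sigma_i$.
   Context: A Latin square of order $n$ is an $n\times n$ array with entries in $[n]$, each symbol once in each row and column. Permutations compose right to left. An isotopism $(\alpha,\beta,\gamma)\in S_n^3$ acts by $(\alpha,\beta,\gamma)(L)=L'$ with $L'(\alpha(r),\beta(c))=\gamma(L(r,c))$; $\mathfrak A(L)=\{\Theta\in S_n^3:\Theta(L)=L\}$ is the autotopy group. Rows and columns are viewed as permutations: if symbol $i$ appears in the $j$th place of a row (column) $\sigma$, then $\sigma(i)=j$; so row $r$ is $\sigma_r$ with $\sigma_r(L(r,c))=c$. $L$ is reduced if its first row and first column are the identity permutation. The cycle structure of a permutation is the multiset of lengths of the cycles in its disjoint cycle decomposition. *)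

(* Defs.v *)
From mathcomp Require Import all_boot all_fingroup.
Set Implicit Arguments. Unset Strict Implicit. Unset Printing Implicit Defensive.
Local Open Scope group_scope.

(* A Latin square of order n on symbols 'I_n (symbol k <-> k+1 of the paper). *)
Record latin_square (n : nat) := LatinSquare {
  ls_entry :> 'I_n -> 'I_n -> 'I_n;
  ls_row_inj : forall r, injective (ls_entry r);
  ls_col_inj : forall c, injective (fun r => ls_entry r c) }.

Definition row_perm n (L : latin_square n) (r : 'I_n) : {perm 'I_n} :=
  (perm (@ls_row_inj n L r))^-1.

Definition reduced n (L : latin_square n.+1) : Prop :=
  (forall c, L ord0 c = c) /\ (forall r, L r ord0 = r).

Definition autotopy n (L : latin_square n) (a b g : {perm 'I_n}) : Prop :=
  forall r c, L (a r) (b c) = g (L r c).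

Definition cycle_structure (T : finType) (s : {perm T}) : seq nat :=
  [seq #|X| | X : {set T} <- enum (porbits s)].

Definition same_cycle_structure (T : finType) (s t : {perm T}) : bool :=
  perm_eq (cycle_structure s) (cycle_structure t).

(* Main.v *)
Require Import Defs.
From mathcomp Require Import all_boot all_fingroup.
Local Open Scope group_scope.

Lemma conj_apply (T : finType) (t g : {perm T}) x : (t ^ g) (g x) = g (t x).
Proof. by rewrite conjgE !permM permK. Qed.

Lemma porbit_conj (T : finType) (s g : {perm T}) x :
  porbit (s ^ g) (g x) = [set g y | y in porbit s x].
Proof.
apply/setP=> z; apply/porbitP/imsetP.
  by case=> k ->; exists ((s ^+ k) x); [apply: mem_porbit | rewrite -conjXg conj_apply].
by case=> y /porbitP [k ->] ->; exists k; rewrite -conjXg conj_apply.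
Qed.

Lemma porbits_conj (T : finType) (s g : {perm T}) :
  porbits (s ^ g) = [set [set g y | y in X] | X : {set T} in porbits s].
Proof.
apply/setP=> Z; apply/imsetP/imsetP.
  case=> y _ ->; exists (porbit s (g^-1 y)); first by apply: imset_f.
  by rewrite -porbit_conj permKV.
case=> X /imsetP [x _ ->] ->; exists (g x) => //; by rewrite porbit_conj.
Qed.

Lemma same_conj (T : finType) (s g : {perm T}) : same_cycle_structure (s ^ g) s.
Proof.
rewrite /same_cycle_structure /cycle_structure porbits_conj.
have hinj : injective (fun X : {set T} => [set g y | y in X]).
  by apply: imset_inj; apply: perm_inj.
have E : perm_eq (enum [set [set g y | y in X] | X : {set T} in porbits s])
                  [seq [set g y | y in X] | X : {set T} <- enum (porbits s)].
  apply: uniq_perm; first exact: enum_uniq.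
    by rewrite map_inj_uniq ?enum_uniq.
  move=> Z; rewrite mem_enum; apply/imsetP/mapP; case=> X HX ->; exists X => //;
    by move: HX; rewrite mem_enum.
apply: (perm_trans (perm_map (fun X : {set T} => #|X|) E)).
rewrite -map_comp; rewrite (eq_map (g := fun X : {set T} => #|X|)) // => X /=.
by rewrite card_imset //; apply: perm_inj.
Qed.

Theorem lemma5p1 (n : nat) (L : latin_square n.+1) (a b g : {perm 'I_n.+1}) :
  reduced L -> autotopy L a b g ->
  forall i : 'I_n.+1,
    same_cycle_structure
      (row_perm L (a^-1 i) * (row_perm L (a^-1 ord0))^-1)
      (row_perm L i).
Proof.
move=> [R0 C0] A i.
suff -> : row_perm L (a^-1 i) * (row_perm L (a^-1 ord0))^-1 = row_perm L i ^ g^-1.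
  exact: same_conj.
apply/permP=> x; rewrite conjgE invgK !permM /row_perm invgK.
set c := (perm (@ls_row_inj _ L (a^-1 i)))^-1 x.
have Hx : x = L (a^-1 i) c by rewrite /c -{1}[x](permKV (perm (@ls_row_inj _ L (a^-1 i)))) permE.
have Hg : g x = L i (b c) by rewrite Hx -A permKV.
have H0 : L (a^-1 ord0) c = g^-1 (b c).
  apply: (perm_inj (s := g)); rewrite permKV -A permKV R0 //.
rewrite permE H0 Hg.
congr (g^-1 _).
apply: (perm_inj (s := perm (@ls_row_inj _ L i))).
by rewrite permKV permE.
Qed.
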